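(* Let $S$ be a finite generating subset of a group $G$ with $1\in S$. Assume that the graph $\Gamma=\mathrm{Cay}(G,S)$ is degenerate, and let $H$ be a subgroup of $G$ which is a $2$-fragment of $\Gamma$. Then $S^{-1}HS=S^{-1}S\cup a^{-1}Ha$ for some $a\in S$.
   Context: $\mathrm{Cay}(G,S)$ is the graph $(G,E)$ with $E=\{(x,y):x^{-1}y\in S\}$, so $\Gamma(X)=XS=\{xs:x\in X,s\in S\}$. Write $\partial(X)=XS\setminus X$ and $\nabla(X)=G\setminus XS$. $\Gamma$ is $k$-separable if there is a finite $X$ with $|X|\ge k$, $|\nabla(X)|\ge k$, and then $\kappa_k(\Gamma)=\min\{|\partial(X)|: X\text{ finite},|X|\ge k,|\nabla(X)|\ge k\}$. A $k$-fragment is a finite $X$ with $|X|\ge k$, $|\nabla(X)|\ge k$ and $|\partial(X)|=\kappa_k(\Gamma)$. $\Gamma$ is degenerate if it is $2$-separable and $\kappa_2(\Gamma)=\kappa_1(\Gamma)$. *)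

(* Defs.v *)
From HB Require Import structures.
From mathcomp Require Import all_boot.
From mathcomp Require Import finmap.
Set Implicit Arguments. Unset Strict Implicit. Unset Printing Implicit Defensive.
Local Open Scope fset_scope.
Local Open Scope group_scope.

Section CayleyConnectivity.
Variable G : groupType.

Definition setmul (A B : {fset G}) : {fset G} := [fset x * y | x in A, y in B].
Definition setinv (A : {fset G}) : {fset G} := [fset x^-1 | x in A].
Definition conjset (a : G) (A : {fset G}) : {fset G} := [fset a^-1 * h * a | h in A].

Definition generates (S : {fset G}) : Prop :=
  forall g : G, exists l : seq G,
    all (fun x => (x \in S) || (x^-1 \in S)) l /\ g = foldr (fun x y => x * y) 1 l.

Definition is_subgroup (H : {fset G}) : Prop :=
  1 \in H /\ (forall x y, x \in H -> y \in H -> x * y \in H) /\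
  (forall x, x \in H -> x^-1 \in H).

(* Gamma(X) = XS in Cay(G,S) *)
Definition Gam (S X : {fset G}) : {fset G} := setmul X S.
Definition bdry (S X : {fset G}) : {fset G} := Gam S X `\` X.
(* |∇(X)| >= k where ∇(X) = G \ XS (possibly infinite): there exist
   k distinct elements outside XS *)
Definition nabla_ge (S X : {fset G}) (k : nat) : Prop :=
  exists Y : {fset G}, (k <= #|` Y|)%N /\ (forall y, y \in Y -> y \notin Gam S X).

Definition admissible (S : {fset G}) (k : nat) (X : {fset G}) : Prop :=
  (k <= #|` X|)%N /\ nabla_ge S X k.

Definition separable (S : {fset G}) (k : nat) : Prop :=
  exists X, admissible S k X.

Definition is_kappa (S : {fset G}) (k n : nat) : Prop :=
  (exists X, admissible S k X /\ #|` bdry S X| = n) /\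
  (forall X, admissible S k X -> (n <= #|` bdry S X|)%N).

Definition fragment (S : {fset G}) (k : nat) (X : {fset G}) : Prop :=
  admissible S k X /\ forall n, is_kappa S k n -> #|` bdry S X| = n.

Definition degenerate (S : {fset G}) : Prop :=
  separable S 2 /\ exists n, is_kappa S 2 n /\ is_kappa S 1 n.

End CayleyConnectivity.

(* Main.v *)
Require Import Defs.
From HB Require Import structures.
From mathcomp Require Import all_boot.
From mathcomp Require Import finmap.
From Stdlib Require Import Classical.
From mathcomp Require Import zify.
Local Open Scope fset_scope.
Local Open Scope group_scope.
Set Implicit Arguments. Unset Strict Implicit.
Section S.
Variable G : groupType.
Implicit Types (S H A B : {fset G}).
Lemma setmulP A B x : reflect (exists2 a, a \in A & exists2 b, b \in B & x = a * b) (x \in setmul A B).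
Proof. exact: imfset2P. Qed.
Lemma setinvP A x : (x \in setinv A) = (x^-1 \in A).
Proof.
apply/imfsetP/idP => [[y yA ->]|xA]; first by rewrite invgK.
by exists x^-1 => //; rewrite invgK.
Qed.
Definition R H (s : G) := [fset h * s | h in H].
Lemma memR H s u : (u \in R H s) = (u * s^-1 \in H).
Proof.
apply/imfsetP/idP => [[h hH ->]|uH]; first by rewrite mulgK.
by exists (u * s^-1) => //; rewrite mulgVK.
Qed.
Lemma cardR H s : #|` R H s| = #|` H|.
Proof. rewrite card_in_imfset /=; last by move=> x y _ _; apply: mulIg.
done. Qed.
Definition C S H s := S `&` R H s.

Lemma lemK S H s t : is_subgroup H -> s \in S -> t \in S -> t * s^-1 \notin H ->
  (#|` Gam S H| + 1 <= #|` S| + #|` H|)%N ->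
  (#|` C S H s| + #|` C S H t| > #|` H|)%N.
Proof.
move=> [H1 [HM HV]] sS tS tsH Hcount.
set U := R H s `|` R H t.
have disj : R H s `&` R H t = fset0.
  apply/fsetP => u; rewrite !inE !memR; apply/negP => /andP[us ut].
  move/negP: tsH; apply; have := HM _ _ (HV _ ut) us.
  by rewrite invgM invgK mulgA mulgVK.
have cU : #|` U| = (#|` H| + #|` H|)%N.
  by have := cardfsUI (R H s) (R H t); rewrite disj cardfs0 addn0 !cardR.
have sub : U `|` S `<=` Gam S H.
  apply/fsubsetP => u; rewrite !inE -orbA => /or3P[|| uS].
  - rewrite memR => ush; apply/setmulP; exists (u * s^-1) => //; exists s => //.
    by rewrite mulgVK.
  - rewrite memR => ush; apply/setmulP; exists (u * t^-1) => //; exists t => //.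
    by rewrite mulgVK.
  - by apply/setmulP; exists 1 => //; exists u => //; rewrite mul1g.
have sub2 : U `&` S `<=` C S H s `|` C S H t.
  apply/fsubsetP => u; rewrite !inE => /andP[/orP[]-> ->]; by rewrite ?orbT.
have e1 := cardfsUI U S.
have e2 := cardfsUI (C S H s) (C S H t).
have l1 := fsubset_leq_card sub.
have l2 := fsubset_leq_card sub2.
rewrite cU in e1. move: e1 e2 l1 l2 Hcount. rewrite /U. move=> e1 e2 l1 l2 hc. move: (#|` C S H s `|` C S H t|) (#|` C S H s `&` C S H t|) (#|` C S H s|) (#|` C S H t|) (#|` Gam S H|) (#|` S|) (#|` H|) e1 e2 l1 l2 hc => a b c d e f g. clear. lia.
Qed.

Lemma lemB S H s t h : is_subgroup H -> s \in S -> t \in S -> h \in H ->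
  s^-1 * h * t \notin setmul (setinv S) S ->
  (#|` C S H s| + #|` C S H t| <= #|` H|)%N.
Proof.
move=> [H1 [HM HV]] sS tS hH bad.
pose I1 := [fset u * s^-1 * h | u in C S H s].
pose I2 := [fset v * t^-1 | v in C S H t].
have c1 : #|` I1| = #|` C S H s|.
  by rewrite card_in_imfset //= => x y _ _ /mulIg/mulIg.
have c2 : #|` I2| = #|` C S H t|.
  by rewrite card_in_imfset //= => x y _ _ /mulIg.
have disj : I1 `&` I2 = fset0.
  apply/fsetP => w; rewrite !inE; apply/negP => /andP[/imfsetP[u uC ->] /imfsetP[v vC E]].
  move: uC vC; rewrite !inE => /andP[uS _] /andP[vS _].
  move/negP: bad; apply; apply/setmulP; exists u^-1; first by rewrite setinvP invgK.
  exists v => //.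
  have -> : s^-1 * h = u^-1 * (u * s^-1 * h) by rewrite !mulgA mulVg mul1g.
  by rewrite E !mulgA mulgVK.
have sub : I1 `|` I2 `<=` H.
  apply/fsubsetP => w; rewrite !inE => /orP[/imfsetP[u uC ->]|/imfsetP[v vC ->]].
    by move: uC; rewrite !inE memR => /andP[_ us]; apply: HM.
  by move: vC; rewrite !inE memR => /andP[_ us].
have e := cardfsUI I1 I2.
rewrite disj cardfs0 addn0 c1 c2 in e.
by rewrite -e; apply: fsubset_leq_card.
Qed.

Lemma Ceq S H s t : is_subgroup H -> t * s^-1 \in H -> C S H t = C S H s.
Proof.
move=> [H1 [HM HV]] ts; apply/fsetP => u; rewrite !inE !memR.
congr (_ && _); apply/idP/idP => uH.
  by have := HM _ _ uH ts; rewrite mulgA mulgVK.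
have := HM _ _ uH (HV _ ts); by rewrite invgM invgK mulgA mulgVK.
Qed.
End S.

Theorem lemma9p2 (G : groupType) (S H : {fset G}) :
  generates S -> 1 \in S -> degenerate S ->
  is_subgroup H -> fragment S 2 H ->
  exists2 a, a \in S &
    setmul (setmul (setinv S) H) S = setmul (setinv S) S `|` conjset a H.
Proof.
move=> gen S1 [sep2 [n [k2 k1]]] Hsg [[H2 [Y [Y2 Yout]]] frag].
have [H1 [HM HV]] := Hsg.
have bH : #|` bdry S H| = n := frag n k2.
have adm1 : admissible S 1 [fset 1].
  split; first by rewrite cardfs1.
  exists Y; split; first exact: leq_trans Y2.
  move=> y /Yout; apply: contra => /setmulP[a]; rewrite inE => /eqP -> [b bS ->].
  by apply/setmulP; exists 1 => //; exists b.
have le1 := k1.2 _ adm1.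
have e1 : setmul [fset 1] S = S.
  apply/fsetP => x; apply/setmulP/idP => [[a]|xS].
    by rewrite inE => /eqP -> [b bS ->]; rewrite mul1g.
  by exists 1; [rewrite inE | exists x => //; rewrite mul1g].
have bdry1 : #|` bdry S [fset 1]| = (#|` S| - 1)%N.
  rewrite /bdry /Gam e1; have := cardfsD1 1 S; rewrite S1 /= => ->; by rewrite addKn.
have S0 : (0 < #|` S|)%N by have := cardfsD1 1 S; rewrite S1 /= => ->.
have HG : H `<=` Gam S H.
  by apply/fsubsetP => x xH; apply/setmulP; exists x => //; exists 1 => //; rewrite mulg1.
have bdryH : #|` bdry S H| = (#|` Gam S H| - #|` H|)%N by rewrite /bdry cardfsDS.
have HGc := fsubset_leq_card HG.
have Hcount : (#|` Gam S H| + 1 <= #|` S| + #|` H|)%N.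
  move: le1 HGc S0; rewrite bdry1 -bH bdryH.
  move: (#|` Gam S H|) (#|` S|) (#|` H|) => a b c. clear. lia.
have badstep : forall s h t, s \in S -> h \in H -> t \in S ->
    s^-1 * h * t \notin setmul (setinv S) S ->
    t * s^-1 \in H /\ (#|` C S H s| + #|` C S H s| <= #|` H|)%N.
  move=> s h t sS hH tS bad.
  have cB := lemB Hsg sS tS hH bad.
  have ts : t * s^-1 \in H.
    apply/negPn/negP => nts; by have := lemK Hsg sS tS nts Hcount; rewrite ltnNge cB.
  by split => //; rewrite -{2}(@Ceq _ S _ _ _ Hsg ts).
have back : forall a, a \in S ->
    setmul (setinv S) S `|` conjset a H `<=` setmul (setmul (setinv S) H) S.
  move=> a aS; apply/fsubsetP => x; rewrite inE => /orP[/setmulP[y yS [v vS ->]]|/imfsetP[k kH ->]].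
    apply/setmulP; exists (y * 1); last by exists v => //; rewrite mulg1.
    by apply/setmulP; exists y => //; exists 1.
  apply/setmulP; exists (a^-1 * k); last by exists a.
  by apply/setmulP; exists a^-1; [rewrite setinvP invgK | exists k].
have fwd : forall x, x \in setmul (setmul (setinv S) H) S ->
    exists s h t, [/\ s \in S, h \in H, t \in S & x = s^-1 * h * t].
  move=> x /setmulP[y /setmulP[z zinv [h hH ->]] [t tS ->]].
  exists z^-1, h, t; split => //; first by rewrite -setinvP.
  by rewrite invgK.
case: (classic (exists s h t, [/\ s \in S, h \in H, t \in S &
           s^-1 * h * t \notin setmul (setinv S) S])) =>
  [[s0 [h0 [t0 [s0S h0H t0S bad0]]]] | nobad].
  exists s0 => //; apply/eqP; rewrite eqEfsubset back // andbT.
  apply/fsubsetP => x /fwd[s [h [t [sS hH tS ->]]]].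
  rewrite in_fsetU; case: (boolP (s^-1 * h * t \in setmul (setinv S) S)) => [//|bad].
  apply/orP; right.
  have [ts Cs] := badstep _ _ _ sS hH tS bad.
  have [_ Cs0] := badstep _ _ _ s0S h0H t0S bad0.
  have s0s : s0 * s^-1 \in H.
    apply/negPn/negP => nts; move: (lemK Hsg sS s0S nts Hcount) Cs Cs0.
    move: (#|` C S H s|) (#|` C S H s0|) (#|` H|) => a b c. clear. lia.
  apply/imfsetP; exists (s0 * s^-1 * h * (t * s0^-1)).
    apply: (HM); first exact: (HM).
    by have := HM _ _ ts (HV _ s0s); rewrite invgM invgK mulgA mulgVK.
  by rewrite !mulgA mulVg mul1g mulgVK.
exists 1 => //; apply/eqP; rewrite eqEfsubset back // andbT.
apply/fsubsetP => x /fwd[s [h [t [sS hH tS ->]]]].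
rewrite in_fsetU; case: (boolP (s^-1 * h * t \in setmul (setinv S) S)) => [//|bad].
by exfalso; apply: nobad; exists s, h, t.
Qed.
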